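(* Let $\Gamma$ be a graph such that $\chi(\overline{\Gamma})=k$. Let $H$ be a graph and suppose $F$ is a bipartite graph on $k$ vertices which does not contain any graph in $\mathcal{F}_H$ as a subgraph. Then $\Gamma$ has a subgraph $G$ with at least $e(\Gamma)e(F)/\binom{k}{2}$ edges that does not contain $H$ as an induced subgraph.
   Context: For a graph $H$ and a vertex partition $V(H)=V_1\sqcup\dots\sqcup V_k$, the quotient graph is the graph on $\{1,\dots,k\}$ in which $i\ne j$ are adjacent if some vertex of $V_i$ is adjacent in $H$ to some vertex of $V_j$. If every $V_i$ is a clique in $H$, this is a clique quotient of $H$. $\mathcal{F}_H$ denotes the family of bipartite graphs that are clique quotients of $H$. $\overline{\Gamma}$ is the complement of $\Gamma$ and $\chi$ denotes chromatic number. *)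

(* Defs.v *)
From mathcomp Require Import all_boot all_order.
Set Implicit Arguments. Unset Strict Implicit. Unset Printing Implicit Defensive.

Definition simple_graph (T : finType) (e : rel T) : Prop :=
  symmetric e /\ irreflexive e.

Definition nedges (T : finType) (e : rel T) : nat :=
  #|[set p : T * T | e p.1 p.2]|./2.

Definition compl_graph (T : finType) (e : rel T) : rel T :=
  fun x y => (x != y) && ~~ e x y.

Definition colorable (T : finType) (e : rel T) (k : nat) : Prop :=
  exists f : T -> 'I_k, forall x y, e x y -> f x != f y.

Definition chromatic_number_eq (T : finType) (e : rel T) (k : nat) : Prop :=
  colorable e k /\ forall j, colorable e j -> k <= j.

Definition bipartite (T : finType) (e : rel T) : Prop :=
  exists b : T -> bool, forall x y, e x y -> b x != b y.

Definition contains_subgraph (T U : finType) (eF : rel T) (eQ : rel U) : Prop :=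
  exists phi : U -> T, injective phi /\ forall x y, eQ x y -> eF (phi x) (phi y).

(* vertex partition of H given by a surjective map p : W -> 'I_m (blocks
   p^-1(i), all nonempty) *)
Definition clique_partition (W : finType) (eH : rel W) (m : nat) (p : W -> 'I_m) : Prop :=
  (forall i : 'I_m, exists x, p x = i) /\
  (forall x y, x != y -> p x = p y -> eH x y).

Definition quotient_graph (W : finType) (eH : rel W) (m : nat) (p : W -> 'I_m) : rel 'I_m :=
  fun i j => (i != j) && [exists x, exists y, [&& p x == i, p y == j & eH x y]].

(* Q on 'I_m belongs to F_H (up to isomorphism): Q is a bipartite clique
   quotient of H. *)

Definition contains_induced (V W : finType) (S : {set V}) (eG : rel V) (eH : rel W) : Prop :=
  exists phi : W -> V, injective phi /\ (forall x, phi x \in S) /\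
    forall x y, eH x y = eG (phi x) (phi y).

(* Main.v *)
Require Import Defs.
From mathcomp Require Import all_boot all_order all_fingroup.
From mathcomp Require Import zify.
Set Implicit Arguments. Unset Strict Implicit. Unset Printing Implicit Defensive.

Definition Dc (T : finType) (e : rel T) : nat := \sum_x \sum_y (e x y : nat).

Lemma card_pairs (T : finType) (e : rel T) :
  #|[set p : T * T | e p.1 p.2]| = Dc e.
Proof.
rewrite cardsE -sum1_card big_mkcond /Dc pair_big /=.
apply: eq_bigr => -[x y] _ /=; rewrite unfold_in /=; by case: (e x y).
Qed.

Lemma Dc_split (T : finType) (e : rel T) : simple_graph e ->
  Dc e = 2 * \sum_x \sum_y (e x y && (enum_rank x < enum_rank y) : nat).
Proof.
case=> sym irr.
have H : forall x y, (e x y : nat) = (e x y && (enum_rank x < enum_rank y)) + (e y x && (enum_rank y < enum_rank x)).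
  move=> x y; rewrite (sym y x).
  case: (ltngtP (enum_rank x) (enum_rank y)) => h.
  - by rewrite andbT andbF addn0.
  - by rewrite andbT andbF.
  - by have := enum_rank_inj (val_inj h) => ->; rewrite irr.
rewrite /Dc.
under eq_bigr => x _ do under eq_bigr => y _ do rewrite H.
under eq_bigr => x _ do rewrite big_split /=.
rewrite big_split /= [X in _ + X = _]exchange_big /=. by rewrite addnn mul2n.
Qed.

Lemma Dc_nedges (T : finType) (e : rel T) : simple_graph e -> Dc e = 2 * nedges e.
Proof.
move=> sg; rewrite /nedges card_pairs (Dc_split sg).
by rewrite [X in X./2]mul2n doubleK.
Qed.

Lemma perm_trans2 k (i j a b : 'I_k) : i != j -> a != b ->
  exists t : {perm 'I_k}, t i = a /\ t j = b.
Proof.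
move=> ij ab.
pose t1 := tperm i a; pose t2 := tperm (t1 j) b.
have ja : t1 j != a.
  apply/eqP => h; move: ij; rewrite -(tpermL i a) -/t1 in h.
  by rewrite (perm_inj h) eqxx.
exists (t1 * t2)%g; rewrite !permM; split.
  by rewrite /t1 tpermL /t2 tpermD // eq_sym.
by rewrite /t2 tpermL.
Qed.

Lemma Nconst k (F : rel 'I_k) (i j i' j' : 'I_k) : i != j -> i' != j' ->
  \sum_(s : {perm 'I_k}) F (s i) (s j) = \sum_(s : {perm 'I_k}) F (s i') (s j').
Proof.
move=> ij ij'; have [t [ti tj]] := perm_trans2 ij' ij.
rewrite [RHS](reindex_inj (mulgI t)) /=.
by apply: eq_bigr => s _; rewrite !permM ti tj.
Qed.

Lemma sum_perm_pairs k (F : rel 'I_k) :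
  \sum_(s : {perm 'I_k}) \sum_i \sum_j (F (s i) (s j) : nat) = k`! * \sum_i \sum_j (F i j : nat).
Proof.
rewrite -card_Sn -sum_nat_const; apply: eq_bigr => s _.
rewrite (reindex_inj (@perm_inj _ s^-1)) /=; apply: eq_bigr => i _.
rewrite (reindex_inj (@perm_inj _ s^-1)) /=; apply: eq_bigr => j _.
by rewrite !permKV.
Qed.

Lemma count_neq k (i : 'I_k) : \sum_j (i != j : nat) = k.-1.
Proof.
rewrite (bigD1 i) //= eqxx add0n.
rewrite (eq_bigr (fun _ => 1)); last by move=> j ji; rewrite eq_sym ji.
by rewrite sum1_card cardC1 card_ord.
Qed.

Lemma N_formula k (F : rel 'I_k) (i0 i1 : 'I_k) : irreflexive F -> i0 != i1 ->
  k * k.-1 * \sum_(s : {perm 'I_k}) F (s i0) (s i1) = k`! * \sum_i \sum_j (F i j : nat).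
Proof.
move=> irr d; rewrite -sum_perm_pairs exchange_big /=.
under [RHS]eq_bigr => i _ do rewrite exchange_big /=.
have -> : \sum_(i : 'I_k) \sum_(j : 'I_k) \sum_(s : {perm 'I_k}) (F (s i) (s j) : nat)
   = \sum_(i : 'I_k) \sum_(j : 'I_k) (i != j) * \sum_(s : {perm 'I_k}) F (s i0) (s i1).
  apply: eq_bigr => i _; apply: eq_bigr => j _.
  case: eqP => [->|/eqP nij]; first by rewrite mul0n big1 // => s _; rewrite irr.
  by rewrite mul1n (Nconst _ nij d).
under [RHS]eq_bigr => i _ do rewrite -big_distrl /= count_neq.
by rewrite sum_nat_const card_ord mulnA.
Qed.

Lemma exists_ge (T : finType) (x0 : T) (f : T -> nat) :
  exists x, \sum_t f t <= #|T| * f x.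
Proof.
have [x _ hx] := @eq_bigmax_cond T xpredT f (ltac:(by apply/card_gt0P; exists x0)).
exists x; rewrite -hx -sum_nat_const; apply: leq_sum => t _; exact: leq_bigmax.
Qed.

Lemma partition_of (W : finType) k (g : W -> 'I_k) :
  exists m (p : W -> 'I_m), (forall i, exists w, p w = i) /\
     (forall x y, p x = p y <-> g x = g y).
Proof.
pose s := undup [seq g w | w <- enum W].
have mem w : g w \in s by rewrite mem_undup; apply/mapP; exists w => //; rewrite mem_enum.
have lt w : index (g w) s < size s by rewrite index_mem.
exists (size s), (fun w => Ordinal (lt w)); split.
  move=> i.
  have : 0 < #|W|.
    apply: leq_trans (leq_ltn_trans (leq0n i) (ltn_ord i)) _; rewrite cardE.
    by apply: leq_trans (size_undup _) _; rewrite size_map.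
  case/card_gt0P => w0 _.
  have : nth (g w0) s i \in s by rewrite mem_nth.
  rewrite mem_undup => /mapP [w _ hw]; exists w; apply: val_inj => /=.
  by rewrite -hw index_uniq // undup_uniq.
move=> x y; split.
  move=> /(congr1 val) /= h.
  by rewrite -(nth_index (g x) (mem x)) h nth_index.
by move=> h; apply: val_inj => /=; rewrite h.
Qed.

Lemma ord_le1 k (i j : 'I_k) : k <= 1 -> i = j.
Proof.
move=> hk; apply: ord_inj.
have := ltn_ord i; have := ltn_ord j; lia.
Qed.

Lemma even_bin2 k : k * k.-1 = 2 * 'C(k, 2).
Proof.
rewrite bin2 mul2n halfK.
have -> : odd (k * k.-1) = false by case: k => [|k'] //=; rewrite oddM /=; case: (odd k').
by rewrite subn0.
Qed.

Theorem lemma2p3 (V : finType) (eGam : rel V) (k : nat)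
    (W : finType) (eH : rel W) (eF : rel 'I_k) :
  simple_graph eGam ->
  chromatic_number_eq (compl_graph eGam) k ->
  simple_graph eH ->
  simple_graph eF ->
  bipartite eF ->
  (forall (m : nat) (p : W -> 'I_m),
      clique_partition eH p -> bipartite (quotient_graph eH p) ->
      ~ contains_subgraph eF (quotient_graph eH p)) ->
  exists (S : {set V}) (eG : rel V),
    simple_graph eG /\
    (forall x y, eG x y -> [/\ x \in S, y \in S & eGam x y]) /\
    nedges eG * 'C(k, 2) >= nedges eGam * nedges eF /\
    ~ contains_induced S eG eH.
Proof.
move=> sgG [[c hc] _] sgH sgF [b hb] hyp.
have [symG irrG] := sgG; have [symF irrF] := sgF.
have samecol x y : x != y -> c x = c y -> eGam x y.
  move=> nxy cxy; apply/negPn/negP => nG.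
  by have := hc x y; rewrite /compl_graph nxy nG cxy eqxx => /(_ isT).
pose eGs (s : {perm 'I_k}) : rel V :=
  fun x y => eGam x y && ((c x == c y) || eF (s (c x)) (s (c y))).
have sgs s : simple_graph (eGs s).
  split; last by move=> x; rewrite /eGs irrG.
  by move=> x y; rewrite /eGs symG eq_sym symF.
have count : exists s, nedges eGam * nedges eF <= nedges (eGs s) * 'C(k, 2).
  case: (leqP k 1) => hk.
    have -> : nedges eF = 0.
      have : Dc eF = 0 by apply: big1 => i _; apply: big1 => j _; rewrite (ord_le1 i j hk) irrF.
      by rewrite (Dc_nedges sgF); case: (nedges eF).
    by exists 1%g; rewrite muln0.
  pose i0 : 'I_k := Ordinal (ltn_trans (ltnSn 0) hk).
  pose i1 : 'I_k := Ordinal hk.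
  have d01 : i0 != i1 by [].
  pose N := \sum_(s : {perm 'I_k}) (eF (s i0) (s i1) : nat).
  have Nle : N <= k`!.
    by rewrite -card_Sn -sum1_card; apply: leq_sum => s _; exact: leq_b1.
  have sumge : Dc eGam * N <= \sum_(s : {perm 'I_k}) Dc (eGs s).
    rewrite /Dc big_distrl [X in _ <= X]exchange_big /=; apply: leq_sum => x _.
    rewrite big_distrl [X in _ <= X]exchange_big /=; apply: leq_sum => y _.
    rewrite /eGs; case: (eGam x y); last by rewrite mul0n.
    rewrite mul1n /=; case: eqP => [_|/eqP ncxy].
      by rewrite sum1_card card_Sn.
    by rewrite /N (Nconst _ ncxy d01).
  have [s hs] := exists_ge 1%g (fun s => Dc (eGs s)).
  exists s; move: hs; rewrite card_Sn => hs.
  have key : k`! * (Dc eGam * Dc eF) <= k`! * (Dc (eGs s) * (k * k.-1)).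
    rewrite mulnCA -(N_formula irrF d01).
    have -> : Dc eGam * (k * k.-1 * N) = (Dc eGam * N) * (k * k.-1) by lia.
    rewrite [X in _ <= X]mulnA leq_mul2r; apply/orP; right; apply: leq_trans sumge _; exact: hs.
  rewrite leq_pmul2l ?fact_gt0 // in key.
  move: key; rewrite (Dc_nedges sgG) (Dc_nedges sgF) (Dc_nedges (sgs s)) even_bin2.
  rewrite mulnACA [X in _ <= X]mulnACA leq_pmul2l //.
have [s hs] := count.
exists setT, (eGs s); split; first exact: sgs.
split; first by move=> x y /andP [h _]; rewrite !inE.
split; first exact: hs.
case=> phi [injphi [_ hphi]].
have [m [p [surj hp]]] := partition_of (fun w => c (phi w)).
have cp : clique_partition eH p.
  split; first exact: surj.
  move=> x y nxy pxy; rewrite hphi /eGs.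
  have cxy : c (phi x) = c (phi y) by apply/hp.
  rewrite cxy eqxx andbT; apply: samecol => //.
  by apply: contra nxy => /eqP /injphi ->.
have surj' i : exists w, p w == i by have [w hw] := surj i; exists w; apply/eqP.
pose psi (i : 'I_m) := s (c (phi (xchoose (surj' i)))).
have hpsi i : p (xchoose (surj' i)) = i by apply/eqP; exact: xchooseP (surj' i).
have edge i j : quotient_graph eH p i j -> eF (psi i) (psi j).
  case/andP => nij /existsP [x /existsP [y /and3P [/eqP px /eqP py exy]]].
  move: exy; rewrite hphi /eGs => /andP [_ /orP [/eqP cxy|f]].
    by move/hp: cxy; rewrite px py => eij; rewrite eij eqxx in nij.
  have ex : c (phi x) = c (phi (xchoose (surj' i))) by apply/hp; rewrite hpsi.
  have ey : c (phi y) = c (phi (xchoose (surj' j))) by apply/hp; rewrite hpsi.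
  by rewrite /psi -ex -ey.
apply: (hyp m p cp).
  exists (fun i => b (psi i)) => i j /edge; exact: hb.
exists psi; split; last exact: edge.
move=> i j /perm_inj /hp; rewrite !hpsi //.
Qed.
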